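(* Let $(\mathbb{F}_t)_{t\in\mathbb{N}}$ be a filtration on $\mathcal{E}$ with ranges $\mathcal{F}_t$, let $(X^{(i)}_t)_{t\in\mathbb{N}}$, $i=1,\dots,n$, be martingales with respect to $(\mathbb{F}_t)$, and let $g:\mathbb{R}^n\to\mathbb{R}$ be a continuous convex function. Write $\mathbf{X}_t=(X^{(1)}_t,\dots,X^{(n)}_t)$. If $g(\mathbf{X}_t)\in\mathcal{E}$ for all $t$, then $(g(\mathbf{X}_t))_{t\in\mathbb{N}}$ is a sub-martingale with respect to $(\mathbb{F}_t)$.
   Context: Let $\mathcal{E}$ be an order complete vector lattice with a weak order unit $E$, $K$ its Stone space, and $C^\infty(K)$ the vector lattice of continuous functions $K\to[-\infty,\infty]$ finite off a nowhere dense set (identified when equal off a nowhere dense set), the universal completion of $\mathcal{E}$. Fix a Maeda–Ogasawara representation of $\mathcal{E}$ as an order dense ideal of $C^\infty(K)$ with $E$ corresponding to $\mathbf{1}$. For continuous $g:\mathbb{R}^n\to\mathbb{R}$ and $X_1,\dots,X_n\in C^\infty(K)$, $g(X_1,\dots,X_n)$ denotes the unique element of $C^\infty(K)$ agreeing with $\omega\mapsto g(X_1(\omega),\dots,X_n(\omega))$ on the open dense set where all $X_i$ are finite. A conditional expectation on $\mathcal{E}$ is an order continuous, strictly positive linear projection $\mathbb{F}:\mathcal{E}\to\mathcal{E}$ whose range is an order complete vector sublattice of $\mathcal{E}$ and with $\mathbb{F}E=E$. A filtration is a family $(\mathbb{F}_t)$ of conditional expectations with $\mathbb{F}_s=\mathbb{F}_s\mathbb{F}_t=\mathbb{F}_t\mathbb{F}_s$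 for $s\le t$; $\mathcal{F}_t$ is the range of $\mathbb{F}_t$. A process $(X_t)$ in $\mathcal{E}$ is adapted if $X_t\in\mathcal{F}_t$ for all $t$; an adapted process is a sub-martingale if $\mathbb{F}_t(X_s)\ge X_t$ for all $t\le s$, a super-martingale if $\mathbb{F}_t(X_s)\le X_t$ for all $t\le s$, and a martingale if both hold. *)

(* Defs.v *)
From HB Require Import structures.
From mathcomp Require Import all_boot all_order all_algebra.
From mathcomp Require Import all_classical all_reals all_analysis.
Set Implicit Arguments. Unset Strict Implicit. Unset Printing Implicit Defensive.
Import Order.TTheory GRing.Theory Num.Theory.
Local Open Scope classical_set_scope.
Local Open Scope ring_scope.

Section Defs.
Context {R : realType} {K : topologicalType}.
Local Notation fn := (K -> \bar R).

Definition nowhere_dense (A : set K) : Prop := interior (closure A) = set0.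

Definition extremally_disconnected : Prop :=
  forall A : set K, open A -> open (closure A).

(* K is a Stone space of an order complete vector lattice:
   compact Hausdorff extremally disconnected *)
Definition stone_setting : Prop :=
  [/\ compact [set: K], hausdorff_space K & extremally_disconnected].

(* membership in C^infty(K): continuous K -> [-oo,+oo], finite off a
   nowhere dense set.  (Two such functions equal off a nowhere dense set
   are equal everywhere, so no quotient is needed.) *)
Definition Cinf (f : fn) : Prop :=
  continuous f /\ nowhere_dense [set w | ~ (f w \is a fin_num)%E].

Definition cle (f g : fn) : Prop := forall w, (f w <= g w)%E.
Definition clt (f g : fn) : Prop := cle f g /\ f <> g.
Definition czero : fn := fun _ => 0%E.
Definition cone : fn := fun _ => 1%E.

(* vector lattice operations of C^infty(K): h is the (unique) element of
   C^infty(K) agreeing with the pointwise operation where the arguments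
   are finite *)
Definition is_sum (f g h : fn) : Prop :=
  Cinf h /\ forall w, (f w \is a fin_num)%E -> (g w \is a fin_num)%E ->
    h w = (f w + g w)%E.
Definition is_scale (a : R) (f h : fn) : Prop :=
  Cinf h /\ forall w, (f w \is a fin_num)%E -> h w = (a%:E * f w)%E.
Definition is_max (f g h : fn) : Prop :=
  Cinf h /\ forall w, (f w \is a fin_num)%E -> (g w \is a fin_num)%E ->
    h w = Order.max (f w) (g w).

Definition cinf_apply (n : nat) (g : 'rV[R]_n -> R) (X : 'I_n -> fn) (h : fn)
  : Prop :=
  Cinf h /\ forall w, (forall i, (X i w \is a fin_num)%E) ->
    h w = (g (\row_i fine (X i w)))%:E.

Definition riesz_ideal (P : set fn) : Prop :=
  [/\ (forall f, P f -> Cinf f), P czero,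
      (forall f g h, P f -> P g -> is_sum f g h -> P h),
      (forall a f h, P f -> is_scale a f h -> P h) &
      (forall f g, Cinf f -> P g -> (forall w, (`|f w| <= `|g w|)%E) -> P f)].

Definition order_dense (P : set fn) : Prop :=
  forall f, Cinf f -> clt czero f -> exists g, [/\ P g, clt czero g & cle g f].

Definition is_sup_in (P D : set fn) (x : fn) : Prop :=
  [/\ P x, (forall y, D y -> cle y x) &
      (forall z, P z -> (forall y, D y -> cle y z) -> cle x z)].
Definition is_inf_in (P D : set fn) (x : fn) : Prop :=
  [/\ P x, (forall y, D y -> cle x y) &
      (forall z, P z -> (forall y, D y -> cle z y) -> cle z x)].

Definition order_complete (P : set fn) : Prop :=
  forall D, D `<=` P -> D !=set0 -> (exists u, P u /\ forall y, D y -> cle y u) ->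
    exists s, is_sup_in P D s.

Definition vector_sublattice (P S : set fn) : Prop :=
  [/\ S `<=` P, S czero,
      (forall f g h, S f -> S g -> is_sum f g h -> S h),
      (forall a f h, S f -> is_scale a f h -> S h) &
      (forall f g h, S f -> S g -> is_max f g h -> S h)].

Definition range_op (P : set fn) (F : fn -> fn) : set fn := F @` P.

(* conditional expectation on E = P *)
Definition cond_exp (P : set fn) (F : fn -> fn) : Prop :=
  [/\ (forall f, P f -> P (F f)),
      (forall f g h, P f -> P g -> is_sum f g h -> is_sum (F f) (F g) (F h)) /\
      (forall a f h, P f -> is_scale a f h -> is_scale a (F f) (F h)),
      (forall D, D `<=` P -> D !=set0 ->
         (forall x y, D x -> D y -> (exists z, [/\ D z, cle z x & cle z y])) ->
         is_inf_in P D czero -> is_inf_in P (F @` D) czero),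
      (forall f, P f -> cle czero f -> cle czero (F f)) /\
      (forall f, P f -> clt czero f -> clt czero (F f)) &
      (forall f, P f -> F (F f) = F f) /\
      [/\ vector_sublattice P (range_op P F), order_complete (range_op P F) &
          F cone = cone]].

Definition filtration (P : set fn) (F : nat -> fn -> fn) : Prop :=
  (forall t, cond_exp P (F t)) /\
  forall s t, (s <= t)%N -> forall f, P f ->
    F s f = F s (F t f) /\ F s f = F t (F s f).

Definition adapted (P : set fn) (F : nat -> fn -> fn) (X : nat -> fn) : Prop :=
  forall t, range_op P (F t) (X t).

Definition submartingale (P : set fn) (F : nat -> fn -> fn) (X : nat -> fn) :=
  adapted P F X /\ forall t s, (t <= s)%N -> cle (X t) (F t (X s)).

Definition supermartingale (P : set fn) (F : nat -> fn -> fn) (X : nat -> fn) :=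
  adapted P F X /\ forall t s, (t <= s)%N -> cle (F t (X s)) (X t).

Definition martingale (P : set fn) (F : nat -> fn -> fn) (X : nat -> fn) :=
  submartingale P F X /\ supermartingale P F X.

End Defs.

Definition convex_fun {R : realType} {n : nat} (g : 'rV[R]_n -> R) : Prop :=
  forall (x y : 'rV[R]_n) (l : R), 0 <= l -> l <= 1 ->
    g (l *: x + (1 - l) *: y) <= l * g x + (1 - l) * g y.

Definition continuous_rv {R : realType} {n : nat} (g : 'rV[R]_n -> R) : Prop :=
  continuous (g : 'rV[R^o]_n -> R^o).

(* Main.v *)
Require Import Defs.
From HB Require Import structures.
From mathcomp Require Import all_boot all_order all_algebra.
From mathcomp Require Import all_classical all_reals all_analysis.
From mathcomp Require Import ring lra.
Import numFieldNormedType.Exports.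
Set Implicit Arguments. Unset Strict Implicit. Unset Printing Implicit Defensive.
Import Order.TTheory GRing.Theory Num.Theory.
Local Open Scope classical_set_scope.
Local Open Scope ring_scope.


Lemma near_gtE (R : realType) (K : topologicalType) (f : K -> \bar R) w (y : \bar R) :
  {for w, continuous f} -> (y < f w)%E -> \forall x \near w, (y < f x)%E.
Proof.
move=> cf yf; apply: (cf [set u | (y < u)%E]); apply: open_nbhs_nbhs; split => //.
exact: open_ereal_gt_ereal.
Qed.

Lemma near_ltE (R : realType) (K : topologicalType) (f : K -> \bar R) w (y : \bar R) :
  {for w, continuous f} -> (f w < y)%E -> \forall x \near w, (f x < y)%E.
Proof.
move=> cf yf; apply: (cf [set u | (u < y)%E]); apply: open_nbhs_nbhs; split => //.
exact: open_ereal_lt_ereal.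
Qed.

Lemma fin_open (R : realType) (K : topologicalType) (f : K -> \bar R) :
  continuous f -> open [set w | f w \is a fin_num]%E.
Proof.
move=> cf; rewrite openE => w /= fw.
have h1 : (-oo < f w)%E by rewrite ltNye; case: (f w) fw.
have h2 : (f w < +oo)%E by rewrite ltey; case: (f w) fw.
have := near_gtE (cf w) h1; have := near_ltE (cf w) h2.
move=> A B; rewrite /interior /=.
apply: filterS2 A B => x /= a b.
by rewrite fin_numE -ltey -ltNye a b.
Qed.

Lemma ereal_between (R : realType) (a b : \bar R) : (a < b)%E ->
  exists r : R, (a < r%:E)%E /\ (r%:E < b)%E.
Proof.
case: a => [a| |]; case: b => [b| |] //=.
- rewrite lte_fin => ab; exists ((a + b) / 2); rewrite !lte_fin; split; lra.
- by move=> _; exists (a + 1); rewrite lte_fin ltry; split => //; lra.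
- by move=> _; exists (b - 1); rewrite lte_fin ltNyr; split => //; lra.
- by move=> _; exists 0; rewrite ltNyr ltry.
Qed.

Lemma le_dense (R : realType) (K : topologicalType) (f g : K -> \bar R) (S : set K) :
  continuous f -> continuous g -> dense S -> (forall w, S w -> (f w <= g w)%E) ->
  forall w, (f w <= g w)%E.
Proof.
move=> cf cg dS fg w; rewrite leNgt; apply/negP => gf.
have [r [h1 h2]] := ereal_between gf.
have A := near_ltE (cg w) h1; have B := near_gtE (cf w) h2.
have N : nbhs w [set x | (g x < r%:E)%E /\ (r%:E < f x)%E].
  by apply: filterS2 A B => x a b.
have [V [[oV Vw] VS]] : exists V, open_nbhs w V /\ V `<=` [set x | (g x < r%:E)%E /\ (r%:E < f x)%E].
  by move: N; rewrite nbhsE => -[V oV Vsub]; exists V; split.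
have [x [Vx Sx]] := dS V (ex_intro _ w Vw) oV.
have [a b] := VS x Vx; have := fg x Sx.
by rewrite leNgt (lt_trans a b).
Qed.
Lemma rays_cont (R : realType) (K : topologicalType) (f : K -> \bar R) :
  (forall r : R, open [set w | (f w < r%:E)%E]) ->
  (forall r : R, open [set w | (r%:E < f w)%E]) -> continuous f.
Proof.
move=> olt ogt w.
have Nlt r : (f w < r%:E)%E -> \forall x \near w, (f x < r%:E)%E.
  by move=> h; apply: open_nbhs_nbhs; split => //; apply: olt.
have Ngt r : (r%:E < f w)%E -> \forall x \near w, (r%:E < f x)%E.
  by move=> h; apply: open_nbhs_nbhs; split => //; apply: ogt.
change (f @ w --> f w); case E: (f w) => [y| |].
- apply/fine_cvgP; split.
    have h1 : (f w < (y + 1)%:E)%E by rewrite E lte_fin; lra.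
    have h2 : ((y - 1)%:E < f w)%E by rewrite E lte_fin; lra.
    apply: filterS2 (Nlt _ h1) (Ngt _ h2) => x /= a b.
    by rewrite fin_numE; apply/andP; split; apply/negP => /eqP e; move: a b; rewrite e.
  apply/cvgrPdist_lt => e e0.
  have h1 : (f w < (y + e)%:E)%E by rewrite E lte_fin; lra.
  have h2 : ((y - e)%:E < f w)%E by rewrite E lte_fin; lra.
  apply: filterS2 (Nlt _ h1) (Ngt _ h2) => x /=.
  case: (f x) => [z| |] //=; rewrite !lte_fin => a b.
  rewrite ltr_distlC; apply/andP; split; lra.
- apply/cvgeyPgt => A; apply: Ngt; by rewrite E ltry.
- apply/cvgeNyPlt => A; apply: Nlt; by rewrite E ltNyr.
Qed.

Lemma dense_int0 (K : topologicalType) (U : set K) : dense U -> interior (~` U) = set0.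
Proof.
move=> dU; apply/seteqP; split => // z /= hz.
move: hz; rewrite /interior /= nbhsE => -[V [oV Vz] VU].
have [x [Vx Ux]] := dU V (ex_intro _ z Vz) oV.
by have := VU x Vx.
Qed.

Lemma ext_lemma (R : realType) (K : topologicalType) (U : set K) (s : K -> R) :
  @extremally_disconnected K -> open U -> dense U ->
  (forall x, U x -> {for x, continuous s}) ->
  exists h : K -> \bar R, Cinf h /\ forall x, U x -> h x = (s x)%:E.
Proof.
move=> ED oU dU cs.
pose A (r : R) := closure (U `&` [set x | s x < r]).
have oUr r : open (U `&` [set x | s x < r]).
  rewrite openE => x [Ux sx]; rewrite /interior.
  have : \forall z \near x, s z < r.
    by apply: (cs x Ux [set u | u < r]); apply: open_nbhs_nbhs; split => //; exact: open_lt.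
  have : \forall z \near x, U z by apply: open_nbhs_nbhs; split.
  by apply: filterS2 => z.
have oA r : open (A r) by apply: ED.
have cA r : closed (A r) by exact: closed_closure.
have mA r q : r <= q -> A r `<=` A q.
  move=> rq; apply: closureS => x [Ux sx]; split => //; exact: lt_le_trans sx rq.
pose h w := ereal_inf (EFin @` [set r | A r w]).
have hlt w r : (h w < r%:E)%E <-> exists q, q < r /\ A q w.
  split.
    move=> /ereal_inf_lt [_ [q Aq <-]]; rewrite lte_fin => qr; by exists q.
  move=> [q [qr Aq]]; apply: (@le_lt_trans _ _ q%:E); last by rewrite lte_fin.
  by apply: ge_ereal_inf; exists q%:E => //; exists q.
have hgt w r : (r%:E < h w)%E <-> exists q, r < q /\ ~ A q w.
  split.
    move=> /ereal_between [q [rq qh]]; exists q; split; first by rewrite -lte_fin.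
    move=> Aq; have : (h w <= q%:E)%E by apply: ge_ereal_inf; exists q%:E => //; exists q.
    by rewrite leNgt qh.
  move=> [q [rq nA]]; apply: (@lt_le_trans _ _ q%:E); first by rewrite lte_fin.
  apply: le_ereal_inf_tmp => _ [p Ap <-]; rewrite lee_fin.
  rewrite leNgt; apply/negP => pq; apply: nA; exact: (mA p q (ltW pq)).
have hU x : U x -> h x = (s x)%:E.
  move=> Ux; apply/eqP; rewrite eq_le; apply/andP; split.
    rewrite leNgt; apply/negP => /hgt [q [sq nA]]; apply: nA.
    by apply: subset_closure; split.
  rewrite leNgt; apply/negP => /hlt [q [qs Aq]].
  have N : nbhs x [set z | q < s z].
    by apply: (cs x Ux [set u | q < u]); apply: open_nbhs_nbhs; split => //; exact: open_gt.
  have [z [[_ z1] z2]] := Aq _ N.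
  by move: z1; rewrite /= ltNge (ltW z2).
exists h; split; first split.
- apply: rays_cont => r.
    have -> : [set w | (h w < r%:E)%E] = \bigcup_(q in [set q | q < r]) A q.
      apply/seteqP; split => w /=.
        by move=> /hlt [q [qr Aq]]; exists q.
      by move=> [q qr Aq]; apply/hlt; exists q.
    by apply: bigcup_open => q _.
  have -> : [set w | (r%:E < h w)%E] = \bigcup_(q in [set q | r < q]) ~` A q.
    apply/seteqP; split => w /=.
      by move=> /hgt [q [qr Aq]]; exists q.
    by move=> [q qr Aq]; apply/hgt; exists q.
  by apply: bigcup_open => q _; rewrite openC.
- apply/seteqP; split => // z hz; rewrite -(dense_int0 dU).
  apply: (interiorS _ hz).
  have -> : ~` U = closure (~` U) by apply/closure_id; exact: open_closedC.
  apply: closureS => w /= nf Uw; apply: nf; by rewrite hU.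
- exact: hU.
Qed.


Definition od (K : topologicalType) (S : set K) := open S /\ dense S.

Lemma odI (K : topologicalType) (A B : set K) : od A -> od B -> od (A `&` B).
Proof. by move=> [oA dA] [oB dB]; split; [exact: openI | exact: denseI]. Qed.

Lemma od_sub (K : topologicalType) (A B : set K) : od A -> open B -> A `<=` B -> od B.
Proof.
move=> [oA dA] oB AB; split => // V V0 oV.
have [x [Vx Ax]] := dA V V0 oV; exists x; split => //; exact: AB.
Qed.

Lemma Cinf_od (R : realType) (K : topologicalType) (f : K -> \bar R) :
  Cinf f -> od [set w | f w \is a fin_num]%E.
Proof.
move=> [cf nd]; split; first exact: fin_open.
move=> V [x Vx] oV; apply/set0P/negP => /eqP V0.
have : V `<=` interior (closure [set w | ~ (f w \is a fin_num)%E]).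
  rewrite -open_subsetE //; move=> z Vz; apply: subset_closure => /= fz.
  by have : (V `&` [set w | (f w \is a fin_num)%E]) z by [] ; rewrite V0.
by rewrite nd => /(_ x Vx).
Qed.

Lemma eq_dense (R : realType) (K : topologicalType) (f g : K -> \bar R) (S : set K) :
  continuous f -> continuous g -> dense S -> (forall w, S w -> f w = g w) -> f = g.
Proof.
move=> cf cg dS fg; apply/funext => w; apply/eqP; rewrite eq_le; apply/andP; split.
  by apply: (le_dense cf cg dS) => x Sx; rewrite fg.
by apply: (le_dense cg cf dS) => x Sx; rewrite fg.
Qed.

Lemma fine_cont_at (R : realType) (K : topologicalType) (f : K -> \bar R) x :
  continuous f -> (f x \is a fin_num)%E -> {for x, continuous (fun w => fine (f w) : R^o)}.
Proof.
move=> cf fx; have h : f @ x --> (fine (f x))%:E by rewrite fineK //; exact: cf.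
exact: fine_cvg h.
Qed.

Lemma scale_ex (R : realType) (K : topologicalType) (c : R) (f : K -> \bar R) :
  @extremally_disconnected K -> Cinf f -> exists h, is_scale c f h.
Proof.
move=> ED Cf; have [oU dU] := Cinf_od Cf.
have [h [Ch hU]] := @ext_lemma R K _ (fun w => c * fine (f w)) ED oU dU
  (fun x Ux => cvgM (cvg_cst c) (fine_cont_at Cf.1 Ux)).
exists h; split => // w fw; rewrite hU //= -{2}(fineK fw) //.
Qed.

Lemma sum_ex (R : realType) (K : topologicalType) (f g : K -> \bar R) :
  @extremally_disconnected K -> Cinf f -> Cinf g -> exists h, is_sum f g h.
Proof.
move=> ED Cf Cg; have [oU dU] := odI (Cinf_od Cf) (Cinf_od Cg).
have [h [Ch hU]] := @ext_lemma R K _ (fun w => fine (f w) + fine (g w)) ED oU dU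
  (fun x Ux => cvgD (fine_cont_at Cf.1 Ux.1) (fine_cont_at Cg.1 Ux.2)).
exists h; split => // w fw gw; rewrite hU //= -{2}(fineK fw) -{2}(fineK gw) //.
Qed.


Lemma sandwich (R : realType) (Lo Up : set R) : Lo !=set0 -> Up !=set0 ->
  (forall x y, Lo x -> Up y -> x <= y) ->
  exists c, (forall x, Lo x -> x <= c) /\ (forall y, Up y -> c <= y).
Proof.
move=> [x0 Lx0] [y0 Uy0] H; exists (sup Lo); split.
  by apply: ub_le_sup; exists y0 => x Lx; exact: H.
by move=> y Uy; apply: ge_sup; [exists x0 | move=> x Lx; exact: H].
Qed.

Definition Vm (R : realType) n m (v : 'rV[R]_n) := forall i : 'I_n, (m <= i)%N -> v 0 i = 0.
Definition phi (R : realType) n (a : 'I_n -> R) (v : 'rV[R]_n) := \sum_i a i * v 0 i.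

Lemma phiD (R : realType) n (a : 'I_n -> R) u v l k :
  phi a (l *: u + k *: v) = l * phi a u + k * phi a v.
Proof.
rewrite /phi !mulr_sumr -big_split /=; apply: eq_bigr => i _; rewrite !mxE; lra.
Qed.

Lemma convex_ineq (R : realType) (A B G0 pu pv g1 g2 l m : R) : 0 < l -> 0 < m ->
  G0 + l / (l + m) * pu + (m / (l + m)) * pv <= l / (l + m) * g1 + m / (l + m) * g2 ->
  (G0 + pu - g1) / m <= (g2 - G0 - pv) / l.
Proof.
move=> l0 m0 h.
have s0 : 0 < l + m by lra.
have e1 : G0 + l / (l + m) * pu + (m / (l + m)) * pv = (G0 * (l + m) + l * pu + m * pv) / (l + m).
  by field; lra.
have e2 : l / (l + m) * g1 + m / (l + m) * g2 = (l * g1 + m * g2) / (l + m).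
  by field; lra.
rewrite e1 e2 ler_pM2r ?invr_gt0 // in h.
have k : (G0 + pu - g1) * l <= (g2 - G0 - pv) * m.
  rewrite !mulrBl !mulrDl; rewrite mulrDr in h; lra.
have -> : (G0 + pu - g1) / m = ((G0 + pu - g1) * l) / (l * m) by field; lra.
have -> : (g2 - G0 - pv) / l = ((g2 - G0 - pv) * m) / (l * m) by field; lra.
by rewrite ler_pM2r // invr_gt0 mulr_gt0.
Qed.

Lemma subgrad_step (R : realType) n (g : 'rV[R]_n -> R) x0 m (mn : (m < n)%N) a :
  convex_fun g -> (forall v, Vm m v -> g x0 + phi a v <= g (x0 + v)) ->
  exists a', forall v, Vm m.+1 v -> g x0 + phi a' v <= g (x0 + v).
Proof.
move=> cvx IH.
pose i0 := Ordinal mn.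
pose e : 'rV[R]_n := \row_j ((j == i0)%:R).
pose Lo := [set y | exists u mu, [/\ Vm m u, 0 < mu &
   y = (g x0 + phi a u - g (x0 + u - mu *: e)) / mu]].
pose Up := [set y | exists u la, [/\ Vm m u, 0 < la &
   y = (g (x0 + u + la *: e) - g x0 - phi a u) / la]].
have V0 : Vm m (0 : 'rV[R]_n) by move=> i _; rewrite mxE.
have [c [cLo cUp]] : exists c, (forall x, Lo x -> x <= c) /\ (forall y, Up y -> c <= y).
  apply: sandwich.
  - by exists ((g x0 + phi a 0 - g (x0 + 0 - 1 *: e)) / 1); exists 0, 1.
  - by exists ((g (x0 + 0 + 1 *: e) - g x0 - phi a 0) / 1); exists 0, 1.
  move=> _ _ [u [mu [Vu mu0 ->]]] [v [la [Vv la0 ->]]].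
  apply: convex_ineq => //.
  pose lw := la / (la + mu).
  have s0 : 0 < la + mu by lra.
  have lw0 : 0 <= lw by rewrite /lw divr_ge0 // ltW.
  have lw1 : lw <= 1 by rewrite /lw ler_pdivrMr // mul1r; lra.
  have e1 : 1 - lw = mu / (la + mu) by rewrite /lw; field; lra.
  have hl : lw * mu = (1 - lw) * la by rewrite e1 /lw; field; lra.
  have cv := cvx (x0 + u - mu *: e) (x0 + v + la *: e) lw lw0 lw1.
  have pt : lw *: (x0 + u - mu *: e) + (1 - lw) *: (x0 + v + la *: e) =
            x0 + (lw *: u + (1 - lw) *: v).
    apply/rowP => j; rewrite !mxE.
    have : lw * (mu * ((j == i0)%:R)) = (1 - lw) * (la * ((j == i0)%:R)).
      by rewrite !mulrA hl.
    lra.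
  have Vw : Vm m (lw *: u + (1 - lw) *: v).
    by move=> i hi; rewrite !mxE Vu // Vv // !mulr0 addr0.
  have := IH _ Vw; rewrite phiD -pt => h.
  rewrite -e1 -/lw; lra.
pose a' := fun i => if i == i0 then c else a i.
exists a' => v Vv.
pose la := v 0 i0.
pose u := v - la *: e.
have Vu : Vm m u.
  move=> i hi; rewrite /u !mxE; case: eqP => [->|ne].
    by rewrite /la mulr1 subrr.
  rewrite mulr0 subr0; apply: Vv; rewrite ltn_neqAle hi andbT.
  by apply/eqP => emi; apply: ne; apply/val_inj; rewrite /= emi.
have vE : v = u + la *: e by rewrite /u subrK.
have ph : phi a' v = phi a u + c * la.
  rewrite /phi (bigD1 i0) // [in RHS](bigD1 i0) //= /a' eqxx.
  rewrite /u !mxE eqxx mulr1 /la subrr mulr0 add0r addrC; congr (_ + _).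
  apply: eq_bigr => i /negPf ine; rewrite !mxE ine mulr0 subr0.
  by [].
rewrite ph.
have [la0|la0|la0] := ltgtP la 0.
- have hx : Lo ((g x0 + phi a u - g (x0 + u - (- la) *: e)) / (- la)).
    by exists u, (- la); split => //; rewrite oppr_gt0.
  have := cLo _ hx.
  have -> : x0 + u - (- la) *: e = x0 + v by apply/rowP => j; rewrite /u !mxE; ring.
  rewrite ler_pdivrMr ?oppr_gt0 // => h; nra.
- have hx : Up ((g (x0 + u + la *: e) - g x0 - phi a u) / la) by exists u, la; split.
  have := cUp _ hx.
  have -> : x0 + u + la *: e = x0 + v by apply/rowP => j; rewrite /u !mxE; ring.
  rewrite ler_pdivlMr // => h; nra.
- have uv : u = v by rewrite /u la0 scale0r subr0.
  rewrite la0 mulr0 addr0; have -> : x0 + v = x0 + u by rewrite uv.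
  exact: IH.
Qed.

Lemma subgrad (R : realType) n (g : 'rV[R]_n -> R) x0 :
  convex_fun g -> exists a : 'I_n -> R, forall x : 'rV[R]_n,
    g x0 + \sum_i a i * (x 0 i - x0 0 i) <= g x.
Proof.
move=> cvx.
have H : forall m, (m <= n)%N -> exists a, forall v, Vm m v -> g x0 + phi a v <= g (x0 + v).
  elim => [_|m IHm mn].
    exists (fun _ => 0) => v Vv; rewrite /phi big1 ?addr0; last by move=> i _; rewrite mul0r.
    have -> : v = 0 by apply/rowP => j; rewrite mxE; apply: Vv.
    by rewrite addr0.
  have [a Ha] := IHm (ltnW mn).
  exact: subgrad_step mn a cvx Ha.
have [a Ha] := H n (leqnn n).
exists a => x; have := Ha (x - x0).
have -> : x0 + (x - x0) = x by rewrite addrC subrK.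
rewrite /phi; have -> : \sum_i a i * (x - x0) 0 i = \sum_i a i * (x 0 i - x0 0 i).
  by apply: eq_bigr => i _; rewrite !mxE.
by apply; move=> i; rewrite leqNgt ltn_ord.
Qed.



Lemma Cinf_cst (R : realType) (K : topologicalType) (c : R) : Cinf (fun _ : K => c%:E).
Proof.
split; first exact: cst_continuous.
rewrite /nowhere_dense (_ : [set w | _] = set0) ?closure0 ?interior0 //.
by apply/seteqP; split => // w /=; apply.
Qed.

Lemma diff_ex (R : realType) (K : topologicalType) (P : set (K -> \bar R)) f h :
  @extremally_disconnected K -> riesz_ideal P -> P f -> P h ->
  exists d, P d /\ is_sum f d h.
Proof.
move=> ED [PC P0 Psum Pscale Psol] Pf Ph.
have [m mS] := scale_ex (-1) ED (PC _ Pf).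
have Pm : P m by exact: Pscale _ _ _ Pf mS.
have [d dS] := sum_ex ED (PC _ Ph) (PC _ Pm).
have Pd : P d by exact: Psum _ _ _ Ph Pm dS.
exists d; split => //.
have [E ES] := sum_ex ED (PC _ Pf) (PC _ Pd).
have EH : E = h.
  have S := odI (odI (Cinf_od (PC _ Pf)) (Cinf_od (PC _ Pd)))
                (odI (Cinf_od (PC _ Ph)) (Cinf_od (PC _ Pm))).
  apply: (eq_dense ES.1.1 (PC _ Ph).1 S.2) => w [[fw dw] [hw mw]].
  rewrite ES.2 // dS.2 // mS.2 //.
  rewrite -(fineK fw) -(fineK hw) /= -EFinM -!EFinD; congr EFin; lra.
split; first exact: PC.
by move=> w fw dw; rewrite -EH ES.2.
Qed.

Lemma sum_step (R : realType) n m (mn : (m < n)%N) (f : 'I_n -> R) :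
  \sum_(i < n | (i < m.+1)%N) f i = \sum_(i < n | (i < m)%N) f i + f (Ordinal mn).
Proof.
rewrite (bigD1 (Ordinal mn)) /= ?ltnSn // addrC; congr (_ + _).
apply: eq_bigl => i; rewrite ltnS -val_eqE /=.
by case: (ltngtP i m) => //= ->; rewrite eqxx.
Qed.

Lemma affine_ex (R : realType) (K : topologicalType) (P : set (K -> \bar R)) F n
  (Z : 'I_n -> K -> \bar R) (a : 'I_n -> R) (b : R) :
  @extremally_disconnected K -> riesz_ideal P -> P cone -> cond_exp P F ->
  (forall i, P (Z i)) ->
  exists L, [/\ P L,
    (forall w, (forall i, Z i w \is a fin_num)%E ->
       L w = (b + \sum_i a i * fine (Z i w))%:E) &
    (forall w, (forall i, F (Z i) w \is a fin_num)%E ->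
       F L w = (b + \sum_i a i * fine (F (Z i) w))%:E)].
Proof.
move=> ED RI P1 CE PZ.
have [PC P0 Psum Pscale Psol] := RI.
have [Pstab [lsum lscale] _ _ [_ [_ _ F1]]] := CE.
suff H : forall m, (m <= n)%N -> exists L, [/\ P L,
    (forall w, (forall i, Z i w \is a fin_num)%E ->
       L w = (b + \sum_(i < n | (i < m)%N) a i * fine (Z i w))%:E) &
    (forall w, (forall i, F (Z i) w \is a fin_num)%E ->
       F L w = (b + \sum_(i < n | (i < m)%N) a i * fine (F (Z i) w))%:E)].
  have [L [PL h1 h2]] := H n (leqnn n); exists L; split => //.
    by move=> w wf; rewrite h1 //; congr (_ + _)%:E; apply: eq_bigl => i; rewrite ltn_ord.
  by move=> w wf; rewrite h2 //; congr (_ + _)%:E; apply: eq_bigl => i; rewrite ltn_ord.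
elim => [_|m IH mn].
  have [L0 L0S] := scale_ex b ED (PC _ P1).
  exists L0; split.
  - exact: Pscale _ _ _ P1 L0S.
  - by move=> w _; rewrite big_pred0 // addr0 L0S.2 // mule1.
  - move=> w _; rewrite big_pred0 // addr0.
    have := lscale _ _ _ P1 L0S; rewrite F1 => -[_ ->] //; by rewrite mule1.
have [L [PL h1 h2]] := IH (ltnW mn).
pose i0 := Ordinal mn.
have [M MS] := scale_ex (a i0) ED (PC _ (PZ i0)).
have PM : P M by exact: Pscale _ _ _ (PZ i0) MS.
have [L' L'S] := sum_ex ED (PC _ PL) (PC _ PM).
exists L'; split.
- exact: Psum _ _ _ PL PM L'S.
- move=> w wf; rewrite L'S.2; [|by rewrite h1 |by rewrite MS.2 // fin_numM].
  by rewrite h1 // MS.2 // sum_step -(fineK (wf i0)) /= -EFinM -EFinD addrA.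
- move=> w wf.
  have FM := lscale _ _ _ (PZ i0) MS.
  have FL := lsum _ _ _ PL PM L'S.
  rewrite FL.2; [|by rewrite h2 |by rewrite FM.2 // fin_numM].
  by rewrite h2 // FM.2 // sum_step -(fineK (wf i0)) /= -EFinM -EFinD addrA.
Qed.


Lemma od_all (K : topologicalType) n (A : 'I_n -> set K) :
  (forall i, od (A i)) -> od [set w | forall i, A i w].
Proof.
move=> hA.
suff H : forall m, od [set w | forall i : 'I_n, (i < m)%N -> A i w].
  have := H n; rewrite (_ : [set w | _] = [set w | forall i, A i w]) //.
  by apply/seteqP; split => w /= h i; [apply: h; rewrite ltn_ord | move=> _; apply: h].
elim => [|m IH].
  rewrite (_ : [set w | _] = setT); last by apply/seteqP; split => // w _ i.
  split; first exact: openT.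
  by move=> V [x Vx] _; exists x.
case: (ltnP m n) => mn; last first.
  rewrite (_ : [set w | _] = [set w | forall i : 'I_n, (i < m)%N -> A i w]) //.
  apply/seteqP; split => w /= h i hi; apply: h.
    exact: leqW.
  exact: leq_trans (ltn_ord i) mn.
rewrite (_ : [set w | _] = [set w | forall i : 'I_n, (i < m)%N -> A i w] `&` A (Ordinal mn)).
  exact: odI.
apply/seteqP; split => w /=.
  by move=> h; split => [i hi|]; apply: h => //; apply: ltnW.
move=> [h1 h2] i; rewrite ltnS leq_eqVlt => /orP [/eqP e|]; last exact: h1.
by have -> : i = Ordinal mn by apply/val_inj.
Qed.

Theorem mainTheorem10 (R : realType) (K : topologicalType)
  (P : set (K -> \bar R)) (F : nat -> (K -> \bar R) -> (K -> \bar R))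
  (n : nat) (X : 'I_n -> nat -> K -> \bar R) (g : 'rV[R]_n -> R)
  (Y : nat -> K -> \bar R) :
  @stone_setting K ->
  riesz_ideal P -> order_dense P -> order_complete P -> P cone ->
  filtration P F ->
  (forall i, martingale P F (X i)) ->
  continuous_rv g -> convex_fun g ->
  (forall t, cinf_apply g (fun i => X i t) (Y t)) ->
  (forall t, P (Y t)) ->
  submartingale P F Y.
Proof.
move=> [_ _ ED] RI _ _ P1 [CE _] mart _ cvx cinfY PY.
have [PC P0 Psum Pscale Psol] := RI.
have PX i s : P (X i s).
  have [[ad _] _] := mart i.
  have [f Pf <-] := ad s; have [Pstab _ _ _ _] := CE s; exact: Pstab.
have FX i t s : (t <= s)%N -> F t (X i s) = X i t.
  move=> ts; have [[_ sub] [_ sup]] := mart i.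
  by apply/funext => w; apply/eqP; rewrite eq_le sub // sup.
have odX t : od [set w | forall i, (X i t w \is a fin_num)%E].
  by apply: od_all => i; apply: Cinf_od; apply: PC.
have J t s : (t <= s)%N -> forall w0, (forall i, (X i t w0 \is a fin_num)%E) ->
    (Y t w0 <= F t (Y s) w0)%E.
  move=> ts w0 fw0.
  have CEt := CE t.
  have [Pstab [lsum lscale] _ [pos spos] [proj [sub oc F1]]] := CEt.
  pose x0 : 'rV[R]_n := \row_i fine (X i t w0).
  have [a ha] := subgrad x0 cvx.
  pose b := g x0 - \sum_i a i * x0 0 i.
  have bE y : b + \sum_i a i * y i = g x0 + \sum_i a i * (y i - x0 0 i).
    rewrite /b; under [X in _ = _ + X]eq_bigr => i _ do rewrite mulrBr.
    rewrite sumrB; lra.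
  have [L [PL hL hFL]] := @affine_ex _ _ _ (F t) _ (fun i => X i s) a b ED RI P1 CEt (fun i => PX i s).
  have [d [Pd dS]] := diff_ex ED RI PL (PY s).
  have d0 : forall w : K, (Defs.czero w <= d w)%E.
    have S := odI (odI (odX s) (Cinf_od (PC _ PL))) (odI (Cinf_od (PC _ Pd)) (Cinf_od (PC _ (PY s)))).
    apply: (@le_dense R K Defs.czero d _ (@Cinf_cst R K 0).1 (PC _ Pd).1 S.2) => w [[Xw Lw] [dw Yw]].
    have e1 := dS.2 w Lw dw.
    have e2 := (cinfY s).2 w Xw.
    have e3 := hL w Xw.
    have h := ha (\row_i fine (X i s w)).
    have E1 : fine (Y s w) = fine (L w) + fine (d w) by rewrite e1 fineD.
    rewrite e2 e3 /= in E1.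
    rewrite /Defs.czero -(fineK dw) lee_fin.
    have : \sum_i a i * ((\row_i fine (X i s w)) 0 i - x0 0 i) = \sum_i a i * (fine (X i s w) - x0 0 i).
      by apply: eq_bigr => i _; rewrite mxE.
    move: (bE (fun i => fine (X i s w))) => /= e4 e5.
    lra.
  have Fd0 := pos _ Pd d0.
  have FS := lsum _ _ _ PL Pd dS.
  have FLY : forall w, (F t L w <= F t (Y s) w)%E.
    have S := odI (Cinf_od (PC _ (Pstab _ PL))) (Cinf_od (PC _ (Pstab _ Pd))).
    apply: (@le_dense R K (F t L) (F t (Y s)) _ (PC _ (Pstab _ PL)).1 (PC _ (Pstab _ (PY s))).1 S.2) => w [Lw dw].
    by rewrite FS.2 //; apply: leeDl; apply: Fd0.
  apply: le_trans (FLY w0).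
  have fX i : (F t (X i s) w0 \is a fin_num)%E by rewrite FX.
  rewrite hFL // (cinfY t).2 // lee_fin.
  have -> : \sum_i a i * fine (F t (X i s) w0) = \sum_i a i * x0 0 i.
    by apply: eq_bigr => i _; rewrite FX // mxE.
  by rewrite /b subrK.
split; last first.
  move=> t s ts; have [Pstab _ _ _ _] := CE t.
  apply: (@le_dense R K (Y t) (F t (Y s)) _ (PC _ (PY t)).1 (PC _ (Pstab _ (PY s))).1 (odX t).2).
  exact: J.
move=> t.
have [Pstab [lsum lscale] _ [pos spos] [proj _]] := CE t.
have [d [Pd dS]] := diff_ex ED RI (PY t) (Pstab _ (PY t)).
have CY := PC _ (PY t); have CFY := PC _ (Pstab _ (PY t)).
have YF : forall w, (Y t w <= F t (Y t) w)%E.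
  apply: (@le_dense R K (Y t) (F t (Y t)) _ CY.1 CFY.1 (odX t).2).
  exact: J.
have d0 : forall w : K, (Defs.czero w <= d w)%E.
  have S := odI (odI (Cinf_od CY) (Cinf_od (PC _ Pd))) (Cinf_od CFY).
  apply: (@le_dense R K Defs.czero d _ (@Cinf_cst R K 0).1 (PC _ Pd).1 S.2) => w [[Yw dw] Fw].
  have E1 : fine (F t (Y t) w) = fine (Y t w) + fine (d w) by rewrite dS.2 // fineD.
  have := YF w; rewrite -(fineK Yw) -(fineK Fw) lee_fin => h.
  rewrite /Defs.czero -(fineK dw) lee_fin; lra.
have Fd : F t d = Defs.czero.
  have PFY := Pstab _ (PY t).
  have FS := lsum _ _ _ (PY t) Pd dS.
  rewrite proj // in FS.
  have S := odI (Cinf_od CFY) (Cinf_od (PC _ (Pstab _ Pd))).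
  apply: (@eq_dense R K (F t d) Defs.czero _ (PC _ (Pstab _ Pd)).1 (@Cinf_cst R K 0).1 S.2).
  move=> w [Fw dw].
  have E1 : fine (F t (Y t) w) = fine (F t (Y t) w) + fine (F t d w) by rewrite {1}FS.2 // fineD.
  rewrite /Defs.czero -(fineK dw); congr EFin; lra.
have dz : d = Defs.czero.
  apply: contrapT => dn.
  have [_ hne] := spos _ Pd (conj d0 (nesym dn)).
  by apply: hne; rewrite Fd.
exists (Y t) => //.
apply: (@eq_dense R K (F t (Y t)) (Y t) _ CFY.1 CY.1 (Cinf_od CY).2) => w Yw.
by rewrite dS.2 // ?dz /Defs.czero ?adde0.
Qed.
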